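(* Let $G$ be a finite group with $c(G)$ conjugacy classes. Then $Spec_3(G)=\{\frac{c(G)}{|G|},1\}$. More precisely, $Pr(a_1a_2a_3=a_{\pi_1}a_{\pi_2}a_{\pi_3})=\frac{c(G)}{|G|}$ for every non-identity $\pi\in S_3$, where $a_1,a_2,a_3$ are independent uniformly random elements of $G$.
   Context: Permutations are written in one-line notation $\pi=\langle\pi_1\dots\pi_n\rangle$, with $\pi_i=\pi(i)$. For a finite group $G$, $Pr_\pi(G)$ is the probability that $a_1\cdots a_n=a_{\pi_1}\cdots a_{\pi_n}$ for independent uniformly random $a_1,\dots,a_n\in G$. $Spec_n(G)$ is the set $\{Pr_\pi(G):\pi\in S_n\}$. $c(G)$ denotes the number of conjugacy classes of $G$. *)

(* Defs.v *)
From mathcomp Require Import all_boot all_order all_algebra all_fingroup.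
Set Implicit Arguments. Unset Strict Implicit. Unset Printing Implicit Defensive.
Import GRing.Theory.
Local Open Scope ring_scope.

(* Ordered product a_{1} ... a_{n} of a tuple in a finite group
   (indices 0..n-1 of 'I_n play the role of 1..n). *)
Definition wprod (gT : finGroupType) (n : nat) (a : {ffun 'I_n -> gT}) : gT :=
  (\prod_(i < n) a i)%g.

Definition Pr_perm (gT : finGroupType) (G : {group gT}) (n : nat)
    (pi : 'S_n) : rat :=
  (#|[set a : {ffun 'I_n -> gT} | (a \in family (fun _ => G))
        && (wprod a == wprod [ffun i => a (pi i)])]|)%:R
  / (#|G| ^ n)%:R.

Definition Spec (gT : finGroupType) (G : {group gT}) (n : nat) (q : rat) : Prop :=
  exists pi : 'S_n, Pr_perm G pi = q.

(* Main.v *)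
Require Import Defs.
From mathcomp Require Import all_boot all_order all_algebra all_fingroup.
From mathcomp Require Import ring.
Set Implicit Arguments. Unset Strict Implicit. Unset Printing Implicit Defensive.

Section S.
Variables (gT : finGroupType) (G : {group gT}).
Open Scope group_scope.

Definition G3 (t : gT * gT * gT) := [&& t.1.1 \in G, t.1.2 \in G & t.2 \in G].

Lemma fixJ_card x : x \in G ->
  #|'Fix_(G | 'J)[x]| = (\sum_(a | (a \in G) && ((x * a)%g == (a * x)%g)) 1)%N.
Proof.
move=> Gx; rewrite -sum1_card; apply: eq_bigl => a.
rewrite !inE /= sub1set inE conjg_fix; congr (_ && _); apply/commgP/eqP => h.
  by rewrite h.
by rewrite /commute h.
Qed.

Lemma comm_count :
  #|[set t : gT * gT * gT | G3 t && ((t.1.1 * t.1.2)%g == (t.1.2 * t.1.1)%g)]| = (#|classes G| * #|G| * #|G|)%N.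
Proof.
have -> : #|[set t : gT * gT * gT | G3 t && ((t.1.1 * t.1.2)%g == (t.1.2 * t.1.1)%g)]| =
   (\sum_(p | [&& p.1 \in G, p.2 \in G & ((p.1 * p.2)%g == (p.2 * p.1)%g)]) \sum_(c | c \in G) 1)%N.
  rewrite pair_big_dep /= -sum1_card; apply: eq_bigl => -[[a b] c]; rewrite !inE /G3 /=.
  by case: (a \in G); case: (b \in G); case: (c \in G); rewrite /= ?andbF ?andbT.
under eq_bigr do rewrite sum1_card.
rewrite sum_nat_const; congr (_ * _)%N; rewrite -sum1_card.
transitivity (\sum_(x in G) \sum_(a | (a \in G) && ((x * a)%g == (a * x)%g)) 1)%N.
  by rewrite pair_big_dep; apply: eq_bigl => p; rewrite unfold_in.
have GJ : [acts G, on G | 'J] by apply/actsP=> x Gx y; apply: groupJr.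
transitivity (#|orbit 'J G @: G| * #|G|)%N; last by [].
rewrite -(Frobenius_Cauchy GJ); apply: eq_bigr => x Gx; by rewrite fixJ_card.
Qed.

Lemma card_transfer (T : finType) (P Q : pred T) (f g : T -> T) :
  cancel f g -> cancel g f -> (forall x, P x -> Q (f x)) -> (forall y, Q y -> P (g y)) ->
  #|[set x | P x]| = #|[set x | Q x]|.
Proof.
move=> fK gK PQ QP; apply/eqP; rewrite eqn_leq; apply/andP; split.
  rewrite -(card_imset _ (can_inj fK)); apply: subset_leq_card.
  by apply/subsetP => _ /imsetP[x Ax ->]; move: Ax; rewrite !inE => /PQ.
rewrite -(card_imset _ (can_inj gK)); apply: subset_leq_card.
by apply/subsetP => _ /imsetP[x Ax ->]; move: Ax; rewrite !inE => /QP.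
Qed.

Ltac gnorm := do ?rewrite ?mulgA ?mulgK ?mulgKV ?mulgV ?mulVg ?mul1g ?mulg1.

Definition CS := [set t : gT * gT * gT | G3 t && ((t.1.1 * t.1.2)%g == (t.1.2 * t.1.1)%g)].

Lemma c01 : #|[set t : gT * gT * gT | G3 t && ((t.1.1 * (t.1.2 * t.2))%g == (t.1.2 * (t.1.1 * t.2))%g)]| = #|CS|.
Proof.
apply: (card_transfer (f := id) (g := id)) => // -[[a b] c]; rewrite /G3 /=.
  case/andP=> -> /eqP e; apply/eqP; apply: (mulIg c); move: e; gnorm; exact: id.
case/andP=> -> /eqP e; apply/eqP; gnorm; by rewrite e.
Qed.

Lemma c12 : #|[set t : gT * gT * gT | G3 t && ((t.1.1 * (t.1.2 * t.2))%g == (t.1.1 * (t.2 * t.1.2))%g)]| = #|CS|.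
Proof.
apply: (card_transfer (f := fun t => ((t.1.2, t.2), t.1.1)) (g := fun t => ((t.2, t.1.1), t.1.2))).
- by case=> [[a b] c].
- by case=> [[a b] c].
- case=> [[a b] c]; rewrite /G3 /= => /andP[/and3P[-> -> ->] /eqP e] /=; apply/eqP.
  by apply: (mulgI a).
- case=> [[a b] c]; rewrite /G3 /= => /andP[/and3P[-> -> ->] /eqP e] /=; apply/eqP.
  by rewrite e.
Qed.

Lemma c02 : #|[set t : gT * gT * gT | G3 t && ((t.1.1 * (t.1.2 * t.2))%g == (t.2 * (t.1.2 * t.1.1))%g)]| = #|CS|.
Proof.
apply: (card_transfer (f := fun t => ((t.1.1 * t.1.2, t.2 * t.1.1^-1), t.1.1)) (g := fun t => ((t.2, t.2^-1 * t.1.1), t.1.2 * t.2))).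
- by case=> [[a b] c] /=; gnorm.
- by case=> [[a b] c] /=; gnorm.
- case=> [[a b] c]; rewrite /G3 /= => /andP[/and3P[Ga Gb Gc] /eqP e] /=.
  apply/andP; split; first by rewrite /G3 /= !groupM ?groupV ?Ga ?Gb ?Gc. apply/eqP; move: e; gnorm => e; rewrite e; by gnorm.
- case=> [[a b] c]; rewrite /G3 /= => /andP[/and3P[Ga Gb Gc] /eqP e] /=.
  apply/andP; split; first by rewrite /G3 /= !groupM ?groupV ?Ga ?Gb ?Gc. apply/eqP; gnorm; rewrite e; by gnorm.
Qed.

Lemma c120 : #|[set t : gT * gT * gT | G3 t && ((t.1.1 * (t.1.2 * t.2))%g == (t.1.2 * (t.2 * t.1.1))%g)]| = #|CS|.
Proof.
apply: (card_transfer (f := fun t => ((t.1.1, t.1.2 * t.2), t.2)) (g := fun t => ((t.1.1, t.1.2 * t.2^-1), t.2))).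
- by case=> [[a b] c] /=; gnorm.
- by case=> [[a b] c] /=; gnorm.
- case=> [[a b] c]; rewrite /G3 /= => /andP[/and3P[Ga Gb Gc] /eqP e] /=.
  apply/andP; split; first by rewrite /G3 /= !groupM ?groupV ?Ga ?Gb ?Gc. apply/eqP; move: e; gnorm => e; rewrite e; by gnorm.
- case=> [[a b] c]; rewrite /G3 /= => /andP[/and3P[Ga Gb Gc] /eqP e] /=.
  apply/andP; split; first by rewrite /G3 /= !groupM ?groupV ?Ga ?Gb ?Gc. apply/eqP; gnorm; rewrite e; by gnorm.
Qed.

Lemma c201 : #|[set t : gT * gT * gT | G3 t && ((t.1.1 * (t.1.2 * t.2))%g == (t.2 * (t.1.1 * t.1.2))%g)]| = #|CS|.
Proof.
apply: (card_transfer (f := fun t => ((t.1.1 * t.1.2, t.2), t.1.1)) (g := fun t => ((t.2, t.2^-1 * t.1.1), t.1.2))).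
- by case=> [[a b] c] /=; gnorm.
- by case=> [[a b] c] /=; gnorm.
- case=> [[a b] c]; rewrite /G3 /= => /andP[/and3P[Ga Gb Gc] /eqP e] /=.
  apply/andP; split; first by rewrite /G3 /= !groupM ?groupV ?Ga ?Gb ?Gc. apply/eqP; move: e; gnorm => e; rewrite e; by gnorm.
- case=> [[a b] c]; rewrite /G3 /= => /andP[/and3P[Ga Gb Gc] /eqP e] /=.
  apply/andP; split; first by rewrite /G3 /= !groupM ?groupV ?Ga ?Gb ?Gc. apply/eqP; gnorm; rewrite e; by gnorm.
Qed.


Definition i0 : 'I_3 := ord0.
Definition i1 : 'I_3 := lift ord0 (ord0 : 'I_2).
Definition i2 : 'I_3 := lift ord0 (lift ord0 (ord0 : 'I_1)).

Lemma ord3 (j : 'I_3) : j = i0 \/ j = i1 \/ j = i2.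
Proof.
case: j => [[|[|[|k]]] Hk]; [left|right;left|right;right|by []]; exact: val_inj.
Qed.

Definition sel (t : gT * gT * gT) (j : 'I_3) : gT :=
  if j == i0 then t.1.1 else if j == i1 then t.1.2 else t.2.

Lemma sel0 t : sel t i0 = t.1.1. Proof. by []. Qed.
Lemma sel1 t : sel t i1 = t.1.2. Proof. by []. Qed.
Lemma sel2 t : sel t i2 = t.2. Proof. by []. Qed.

Definition h3 (a : {ffun 'I_3 -> gT}) : gT * gT * gT := ((a i0, a i1), a i2).

Lemma hsel (a : {ffun 'I_3 -> gT}) (j : 'I_3) : a j = sel (h3 a) j.
Proof. by case: (ord3 j) => [->|[->|->]]. Qed.

Lemma h3_inj : injective h3.
Proof.
move=> a b e; apply/ffunP => j; by rewrite hsel e -hsel.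
Qed.

Lemma hfam (a : {ffun 'I_3 -> gT}) : (a \in family (fun _ => G)) = G3 (h3 a).
Proof.
apply/familyP/idP => [H|].
  by rewrite /G3 /= !H.
rewrite /G3 /= => /and3P[H0 H1 H2] j; by case: (ord3 j) => [->|[->|->]].
Qed.

Lemma wprod3 (a : {ffun 'I_3 -> gT}) : wprod a = a i0 * (a i1 * a i2).
Proof. by rewrite /wprod !big_ord_recl big_ord0 mulg1. Qed.

Definition Qpi (pi : 'S_3) (t : gT * gT * gT) :=
  (t.1.1 * (t.1.2 * t.2))%g == (sel t (pi i0) * (sel t (pi i1) * sel t (pi i2)))%g.

Lemma set_pi_card (pi : 'S_3) :
  #|[set a : {ffun 'I_3 -> gT} | (a \in family (fun _ => G)) && (wprod a == wprod [ffun i => a (pi i)])]|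
  = #|[set t | G3 t && Qpi pi t]|.
Proof.
have key a : (a \in family (fun _ => G)) && (wprod a == wprod [ffun i => a (pi i)])
   = G3 (h3 a) && Qpi pi (h3 a).
  by rewrite hfam /Qpi !wprod3 !ffunE -!hsel.
rewrite -(card_imset _ h3_inj); apply: eq_card => t; rewrite inE.
apply/imsetP/idP => [[a]|Ht].
  by rewrite inE key => ? ->.
exists [ffun j => sel t j]; last by case: t {Ht} => [[x y] z]; rewrite /h3 !ffunE.
rewrite inE key.
have -> : h3 [ffun j => sel t j] = t by case: t {Ht} => [[x y] z]; rewrite /h3 !ffunE.
done.
Qed.


Lemma id_count : #|[set t | G3 t && Qpi 1 t]| = (#|G| ^ 3)%N.
Proof.
have -> : [set t | G3 t && Qpi 1 t] = setX (setX G G) G.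
  apply/setP => -[[a b] c]; rewrite !inE /Qpi !perm1 sel0 sel1 sel2 eqxx andbT /G3 /=.
  by rewrite andbA.
by rewrite !cardsX !expnS expn0 muln1 mulnA.
Qed.

Lemma set_card_id :
  #|[set a : {ffun 'I_3 -> gT} | (a \in family (fun _ => G)) && (wprod a == wprod [ffun i => a ((1 : 'S_3) i)])]| = (#|G| ^ 3)%N.
Proof. by rewrite set_pi_card id_count. Qed.

Lemma pi_cases (pi : 'S_3) :
  pi = 1 \/ #|[set t | G3 t && Qpi pi t]| = (#|classes G| * #|G| * #|G|)%N.
Proof.
have n01 : pi i0 != pi i1 by rewrite (inj_eq perm_inj).
have n02 : pi i0 != pi i2 by rewrite (inj_eq perm_inj).
have n12 : pi i1 != pi i2 by rewrite (inj_eq perm_inj).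
case: (ord3 (pi i0)) => [e0|[e0|e0]]; case: (ord3 (pi i1)) => [e1|[e1|e1]];
  case: (ord3 (pi i2)) => [e2|[e2|e2]];
  try by (move: n01 n02 n12; rewrite e0 e1 e2 eqxx).
all: try by (left; apply/permP => j; rewrite perm1; case: (ord3 j) => [->|[->|->]]).
all: right; rewrite -comm_count -/(CS).
all: first [ (rewrite -c01; apply: eq_card => t; rewrite !inE /Qpi e0 e1 e2 sel0 sel1 sel2; done) | (rewrite -c12; apply: eq_card => t; rewrite !inE /Qpi e0 e1 e2 sel0 sel1 sel2; done) | (rewrite -c02; apply: eq_card => t; rewrite !inE /Qpi e0 e1 e2 sel0 sel1 sel2; done) | (rewrite -c120; apply: eq_card => t; rewrite !inE /Qpi e0 e1 e2 sel0 sel1 sel2; done) | (rewrite -c201; apply: eq_card => t; rewrite !inE /Qpi e0 e1 e2 sel0 sel1 sel2; done) ].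
Qed.


Lemma set_card_nonid (pi : 'S_3) : pi != 1 ->
  #|[set a : {ffun 'I_3 -> gT} | (a \in family (fun _ => G)) && (wprod a == wprod [ffun i => a (pi i)])]| = (#|classes G| * #|G| * #|G|)%N.
Proof.
move=> npi; rewrite set_pi_card; case: (pi_cases pi) => // e.
by rewrite e eqxx in npi.
Qed.

End S.

Import GRing.Theory Num.Theory.
Local Open Scope ring_scope.

Lemma pr_id (gT : finGroupType) (G : {group gT}) : Pr_perm G (1%g : 'S_3) = 1.
Proof.
rewrite /Pr_perm set_card_id divff // pnatr_eq0 -lt0n expn_gt0 cardG_gt0 //=.
Qed.

Lemma pr_nonid (gT : finGroupType) (G : {group gT}) (pi : 'S_3) : pi != 1%g ->
  Pr_perm G pi = (#|classes G|)%:R / (#|G|)%:R.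
Proof.
move=> npi; rewrite /Pr_perm set_card_nonid //.
have hG : (#|G|)%:R != 0 :> rat by rewrite pnatr_eq0 -lt0n cardG_gt0.
rewrite (natrX _ #|G| 3) !natrM; field; exact: hG.
Qed.

Theorem mainTheorem5 (gT : finGroupType) (G : {group gT}) :
  (forall q : rat,
     Spec G 3 q <-> (q = (#|classes G|)%:R / (#|G|)%:R \/ q = 1)) /\
  (forall pi : 'S_3, pi != 1%g ->
     Pr_perm G pi = (#|classes G|)%:R / (#|G|)%:R).
Proof.
split; last exact: pr_nonid.
move=> q; split.
  case=> pi <-; have [->|npi] := eqVneq pi 1%g; first by right; exact: pr_id.
  by left; exact: pr_nonid.
case=> ->.
  exists (tperm i0 i1); apply: pr_nonid; apply/eqP => h.
  by have := congr1 (fun p : 'S_3 => val (p i0)) h; rewrite tpermL perm1.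
by exists 1%g; exact: pr_id.
Qed.
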